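(* Let $d\geq 3$, $k\geq 1$ and $n=kd-2$. Then $\rho_n(d)(\Delta^2)$ acts on $A^n$ as multiplication by a scalar $\lambda\in A$ with $\lambda\neq 1$.
   Context: In the braid group $B_{n+1}$ with generators $s_1,\dots,s_n$, set $\Delta=(s_1s_2\cdots s_n)(s_1\cdots s_{n-1})\cdots(s_1s_2)(s_1)$. Then $\Delta^2$ is central in $B_{n+1}$. $A=\mathbb{Z}[q,q^{-1}]/(\Phi_d(q))$, where $\Phi_d$ is the $d$-th cyclotomic polynomial. $\rho_n(d):B_{n+1}\to GL_n(A)$ is the reduced Burau representation reduced mod $\Phi_d(q)$. It sends the generator $s_j$ to $T_j$, where $T_j(e_j)=-qe_j$, $T_j(e_{j-1})=e_{j-1}+qe_j$, $T_j(e_{j+1})=e_{j+1}+e_j$, and $T_j(e_k)=e_k$ for $|k-j|\geq 2$, with $e_1,\dots,e_n$ the standard basis. *)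

(* Defs.v *)
From HB Require Import structures.
From mathcomp Require Import all_boot all_order all_algebra all_field.
Set Implicit Arguments. Unset Strict Implicit. Unset Printing Implicit Defensive.
Import GRing.Theory.
Local Open Scope ring_scope.

(* The ring A = Z[q,q^{-1}]/(Phi_d(q)) is represented concretely:
   an element of A is represented by an integer polynomial in q
   (q is invertible modulo Phi_d, so Z[q]/(Phi_d) = Z[q,q^-1]/(Phi_d)),
   and equality in A is congruence modulo the integral cyclotomic
   polynomial 'Phi_d = Cyclotomic d : {poly int}. *)
Definition eqA (d : nat) (a b : {poly int}) : Prop :=
  exists r : {poly int}, a - b = r * Cyclotomic d.

(* Reduced Burau matrix T_j (1 <= j <= n), acting on column vectors
   with standard basis e_1..e_n (index i : 'I_n stands for e_(i+1)):
   column k of T_j is T_j(e_k).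
   T_j e_j = -q e_j, T_j e_(j-1) = e_(j-1) + q e_j,
   T_j e_(j+1) = e_(j+1) + e_j, T_j e_k = e_k otherwise. *)
Definition burauT (n j : nat) : 'M[{poly int}]_n :=
  \matrix_(i < n, k < n)
    if k.+1 == j then (if i.+1 == j then - 'X else 0)
    else if i.+1 == j then
      (if k.+1 == j.-1 then 'X else if k.+1 == j.+1 then 1 else 0)
    else (if i == k then 1 else 0).

Definition burau_word (n : nat) (w : seq nat) : 'M[{poly int}]_n :=
  foldr (fun j M => burauT n j *m M) 1%:M w.

(* Delta = (s_1 ... s_n)(s_1 ... s_(n-1)) ... (s_1 s_2)(s_1) in B_(n+1). *)
Definition Delta_word (n : nat) : seq nat :=
  flatten [seq iota 1 (n - i) | i <- iota 0 n].

Definition Delta2_word (n : nat) : seq nat := Delta_word n ++ Delta_word n.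

(* Main.v *)
Require Import Defs.
From HB Require Import structures.
From mathcomp Require Import all_boot all_order all_algebra all_field.
From mathcomp Require Import ring zify.
Import GRing.Theory.
Local Open Scope ring_scope.

Notation R := {poly int}.

Definition opT (j : nat) (f : nat -> R) : nat -> R :=
  fun i => if i == j then 'X * f j.-1 - 'X * f j + f j.+1 else f i.

Definition opW (w : seq nat) (f : nat -> R) : nat -> R := foldr opT f w.

Lemma opT_ext j f g : f =1 g -> opT j f =1 opT j g.
Proof. by move=> fg i; rewrite /opT !fg. Qed.

Lemma opW_ext w f g : f =1 g -> opW w f =1 opW w g.
Proof. elim: w => [//|j w IH] /= fg; exact: opT_ext (IH fg). Qed.

Lemma opW_cat a b f : opW (a ++ b) f = opW a (opW b f).
Proof. by rewrite /opW foldr_cat. Qed.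

Lemma opW_P m f i : opW (iota 1 m) f i =
  if (0 < i <= m)%N then 'X * f i.-1 - 'X * f m + f m.+1 else f i.
Proof.
elim: m f i => [|m IH] f i.
  by rewrite /=; have -> : (0 < i <= 0)%N = false by lia.
have -> : iota 1 m.+1 = iota 1 m ++ [:: m.+1].
  by rewrite -[m.+1]addn1 iotaD add1n addn1.
rewrite opW_cat IH /= /opT.
case: i => [|i] //=.
case: (ltngtP i m) => him.
- have -> : (i == m.+1) = false by lia.
  have -> : (m == m.+1) = false by lia.
  have -> : (i < m.+1)%N by lia.
  rewrite eqxx; ring.
- have -> : (i.+1 == m.+1) = false by lia.
  by have -> : (i < m.+1)%N = false by lia.
- by subst i; rewrite eqxx ltnSn.
Qed.

Lemma Delta_wordS m : Delta_word m.+1 = iota 1 m.+1 ++ Delta_word m.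
Proof.
rewrite /Delta_word /=; congr (_ :: _); congr (_ ++ _).
rewrite (iotaDl 1 0) -map_comp; congr flatten; apply: eq_map => i /=.
Qed.

Lemma opW_D m f : f 0%N = 0 -> forall i, opW (Delta_word m) f i =
  if (0 < i <= m)%N then - 'X ^+ i * f (m.+1 - i)%N + f m.+1 else f i.
Proof.
move=> f0; elim: m => [|m IH] i.
  by rewrite /=; have -> : (0 < i <= 0)%N = false by lia.
rewrite Delta_wordS opW_cat opW_P !IH.
have -> : (0 < m.+1 <= m)%N = false by lia.
have -> : (0 < m.+2 <= m)%N = false by lia.
case: i => [|i] //=.
case: i => [|i] /=.
  by rewrite f0 subn1 /=; ring.
case: (ltnP i m) => him.
- have -> : (i.+1 < m.+1)%N by lia.
  rewrite !subSS (exprS _ i.+1); ring.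
- have -> : (i.+1 < m.+1)%N = false by lia.
  by have -> : (i.+1 < m)%N = false by lia.
Qed.

Lemma opW_D2 n f : f 0%N = 0 -> f n.+1 = 0 -> forall i, (0 < i <= n)%N ->
  opW (Delta2_word n) f i = 'X ^+ n.+1 * f i.
Proof.
move=> f0 fn i hi.
have g0 : opW (Delta_word n) f 0%N = 0 by rewrite opW_D.
rewrite /Delta2_word opW_cat (opW_D _ _ g0) hi !opW_D // fn addr0.
have -> : (0 < n.+1 - i <= n)%N by lia.
rewrite subKn; last by lia.
have -> : (0 < n.+1 <= n)%N = false by lia.
rewrite addr0 !mulNr !mulrN opprK mulrA -exprD; congr (_ ^+ _ * _); lia.
Qed.

Definition ext n (v : 'cV[R]_n) (i : nat) : R :=
  \sum_(k < n) (if k.+1 == i then v k 0 else 0).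

Arguments ext {n}.

Lemma ext0 n v : @ext n v 0%N = 0.
Proof. by rewrite /ext big1. Qed.

Lemma extn n v : @ext n v n.+1 = 0.
Proof. rewrite /ext big1 // => k _; rewrite eqSS; have -> : (k == n :> nat) = false. by case: k => k /= kn; lia. by []. Qed.

Lemma ext_ord n v (i : 'I_n) : @ext n v i.+1 = v i 0.
Proof.
rewrite /ext (bigD1 i) //= eqxx big1 ?addr0 // => k ki.
by rewrite eqSS val_eqE (negbTE ki).
Qed.

Lemma ext_big n v i : (n < i)%N -> @ext n v i = 0.
Proof.
move=> ni; rewrite /ext big1 // => k _.
have -> : (k.+1 == i) = false by case: k => k /= kn; lia.
by [].
Qed.

Lemma ext_T n j (v : 'cV[R]_n) : (0 < j <= n)%N ->
  forall i, ext (burauT n j *m v) i = opT j (ext v) i.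
Proof.
move=> hj i; rewrite /opT.
case: (ltnP n i) => hni.
  have -> : (i == j) = false by lia.
  by rewrite !ext_big.
case: i hni => [|i] hni.
  by rewrite !ext0; have -> : (0 == j) = false by lia.
have hi : (i < n)%N by [].
have := @ext_ord n (burauT n j *m v) (Ordinal hi); rewrite /= => ->.
rewrite !mxE.
case: (i.+1 =P j) => [ej|nej].
- rewrite /ext !mulr_sumr -sumrB -big_split /=; apply: eq_bigr => k _.
  rewrite !mxE ej eqxx.
  case: (k.+1 =P j) => [e1|n1]; case: (k.+1 =P j.-1) => [e2|n2];
    case: (k.+1 =P j.+1) => [e3|n3]; try (exfalso; lia); ring.
- have nej' : (i.+1 == j) = false by apply/eqP.
  have -> := @ext_ord n v (Ordinal hi).
  rewrite (bigD1 (Ordinal hi)) //= !mxE big1 ?addr0.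
  + by rewrite /= nej' eqxx mul1r.
  + move=> k; rewrite -val_eqE /= => ki; rewrite !mxE /= nej'.
    case: ifP => _; first by rewrite mul0r.
    case: eqP => [e|_]; last by rewrite mul0r.
    by move: ki; rewrite -e /= eqxx.
Qed.

Lemma ext_W n w (v : 'cV[R]_n) : (forall j, j \in w -> (0 < j <= n)%N) ->
  forall i, ext (burau_word n w *m v) i = opW w (ext v) i.
Proof.
elim: w => [|j w IH] hw i /=.
  by rewrite /burau_word /= mul1mx.
rewrite -mulmxA ext_T; last by apply: hw; rewrite mem_head.
apply: opT_ext => l; apply: IH => jj hjj; apply: hw; by rewrite in_cons hjj orbT.
Qed.

Lemma mem_D m j : j \in Delta_word m -> (0 < j <= m)%N.
Proof.
elim: m => [|m IH] //; rewrite Delta_wordS mem_cat mem_iota => /orP [h|/IH h]; lia.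
Qed.

Lemma burau_D2 n (i j : 'I_n) :
  burau_word n (Delta2_word n) i j = 'X ^+ n.+1 * (i == j)%:R.
Proof.
have E : (burau_word n (Delta2_word n) *m (delta_mx j 0 : 'cV[R]_n)) i 0 =
  burau_word n (Delta2_word n) i j by rewrite -colE mxE.
rewrite -E -ext_ord ext_W; last first.
  by move=> l; rewrite /Delta2_word mem_cat => /orP [] /mem_D.
rewrite opW_D2 ?ext0 ?extn //; last by move: (ltn_ord i); lia.
by rewrite ext_ord mxE eqxx andbT.
Qed.

Lemma nocong d m : (1 < d)%N -> (d %| m.+1)%N -> ~ eqA d ('X ^+ m) 1.
Proof.
move=> hd dm [r hr].
have [z pz] := @C_prim_root_exists d (ltnW hd).
have h2 : map_poly (intr : int -> algC) ('X^m - 1) =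
   map_poly (intr : int -> algC) r * map_poly (intr : int -> algC) 'Phi_d.
  by rewrite hr rmorphM.
rewrite (Cintr_Cyclotomic pz) rmorphB /= rmorph1 rmorphXn /= map_polyX in h2.
have := congr1 (fun p => p.[z]) h2.
rewrite /= !hornerE.
have -> : (cyclotomic z d).[z] = 0 by apply/rootP; rewrite root_cyclotomic.
rewrite mulr0 => /eqP; rewrite subr_eq0 => /eqP zm.
have : z ^+ m.+1 == 1 by rewrite -(prim_order_dvd pz).
rewrite exprS zm mulr1 => /eqP z1.
have := eq_prim_root_expr pz 1 0.
rewrite expr1 expr0 z1 eqxx => /esym.
by rewrite /= modn_small // mod0n.
Qed.

Theorem lemma4p5 (d k : nat) (hd : (3 <= d)%N) (hk : (1 <= k)%N) :
  exists lambda : {poly int},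
    (forall i j : 'I_(k * d - 2),
        eqA d (burau_word (k * d - 2) (Delta2_word (k * d - 2)) i j)
              (if i == j then lambda else 0))
    /\ ~ eqA d lambda 1.
Proof.
exists ('X ^+ (k * d - 2).+1); split.
  move=> i j; exists 0; rewrite mul0r burau_D2.
  by case: (i == j); rewrite ?mulr1 ?mulr0 subrr.
apply: nocong; first by lia.
have -> : ((k * d - 2).+2 = k * d)%N by nia.
exact: dvdn_mull.
Qed.
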